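(* For all $d\ge1$ and $I,K\in \mathcal I_d$ we have $\lambda(d_I)\geq \lambda (d_K)$ in the dominance order if and only if $I\leq K$.
   Context: $L_0\cong\mathfrak{sl}_5$ (the degree-zero part of $E(5,10)$), with Borel spanned by $x_i\partial_j$ ($i<j$) and $h_{ij}=x_i\partial_i-x_j\partial_j$, acts by the adjoint action on $U_-$, the enveloping algebra of $L_-=\langle\partial_i\rangle\oplus\langle d_{ij}\rangle$ ($d_{ij}=dx_i\wedge dx_j$). $\mathcal I_d$ is the set of $d$-tuples of ordered pairs $(i_l,j_l)\in[5]^2$ and $d_I=d_{i_1j_1}\cdots d_{i_dj_d}$; $d_I$ is a weight vector with weight $\lambda(d_I)$ given by $h_{ij}.d_I=(m_i(I)-m_j(I))d_I$, where $m_k(I)$ is the number of occurrences of $k$ among $i_1,j_1,\dots,i_d,j_d$. The dominance order: $\lambda\geq\lambda'$ iff $\lambda-\lambda'$ is a nonnegative integer combination of the simple roots $\alpha_{12},\alpha_{23},\alpha_{34},\alpha_{45}$. Viewing $I$ as the sequence $(i_1,j_1,\dots,i_d,j_d)$ of $2d$ integers, let $I_o=(i'_1,\dots,i'_{2d})$ be its nondecreasing reordering; $I\leq K$ means $i'_r\leq k'_r$ for all $r=1,\dots,2d$, where $K_o=(k'_1,\dots,k'_{2d})$. *)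

(* Defs.v *)
From mathcomp Require Import all_boot all_order all_algebra.
Set Implicit Arguments. Unset Strict Implicit. Unset Printing Implicit Defensive.
Import GRing.Theory Num.Theory.
Local Open Scope ring_scope.

(* Indices [5] = {1,...,5} are represented by 'I_5 = {0,...,4} (order-preserving shift). *)

Definition multi_index (d : nat) := (d.-tuple ('I_5 * 'I_5))%type.

Definition flat_idx (d : nat) (I : multi_index d) : seq 'I_5 :=
  flatten [seq [:: p.1; p.2] | p <- I].

Definition mult_idx (d : nat) (I : multi_index d) (k : 'I_5) : nat :=
  count_mem k (flat_idx I).

(* A weight of the Cartan subalgebra of sl_5, recorded by its values on all
   h_{ij} = x_i d_i - x_j d_j. *)
Definition weight := ('I_5 -> 'I_5 -> int)%type.

(* lambda(d_I) : h_{ij} . d_I = (m_i(I) - m_j(I)) d_I. *)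
Definition lambda_d (d : nat) (I : multi_index d) : weight :=
  fun i j => (mult_idx I i)%:Z - (mult_idx I j)%:Z.

Definition eps (k : nat) : weight :=
  fun i j => (k == i :> nat)%:Z - (k == j :> nat)%:Z.

Definition simple_root (k : 'I_4) : weight :=
  fun i j => eps k i j - eps k.+1 i j.

Definition dom_ge (lam lam' : weight) : Prop :=
  exists c : 'I_4 -> nat, forall i j : 'I_5,
    lam i j - lam' i j = \sum_(k < 4) (c k)%:Z * simple_root k i j.

Definition sorted_idx (d : nat) (I : multi_index d) : seq nat :=
  sort leq [seq val x | x <- flat_idx I].

Definition idx_le (d : nat) (I K : multi_index d) : Prop :=
  forall r : nat, (r < 2 * d)%N ->
    (nth 0%N (sorted_idx I) r <= nth 0%N (sorted_idx K) r)%N.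

(* Main.v *)
Require Import Defs.
From mathcomp Require Import all_boot all_order all_algebra zify.
Set Implicit Arguments. Unset Strict Implicit.

Lemma size_flat d (I : multi_index d) : size (flat_idx I) = 2 * d.
Proof.
have E : forall s : seq ('I_5 * 'I_5), size (flatten [seq [:: p.1; p.2] | p <- s]) = 2 * size s.
  by elim=> [|p s IH] //=; rewrite IH; lia.
by rewrite /flat_idx E size_tuple.
Qed.

Lemma mult_val d (I : multi_index d) i :
  mult_idx I i = count_mem (val i) (map (@nat_of_ord 5) (flat_idx I)).
Proof. by rewrite /mult_idx count_map; apply: eq_count => x /=; rewrite val_eqE. Qed.

Lemma cnt_le (s : seq nat) t : count (fun x => x <= t) s = \sum_(k < t.+1) count_mem (k : nat) s.
Proof.
elim: s => [|x s IH] /=; first by rewrite big1.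
rewrite IH big_split /=; congr (_ + _).
elim: t {IH} => [|t IHt]; first by rewrite big_ord1 leqn0.
rewrite big_ord_recr /= -IHt.
case: (ltngtP x t.+1) => H //=.
- by have -> : x <= t by lia.
- by have -> : (x <= t) = false by lia.
- by rewrite H ltnn.
Qed.

Lemma cnt_big d (I : multi_index d) t : 4 <= t ->
  count (fun x => x <= t) (map (@nat_of_ord 5) (flat_idx I)) = 2 * d.
Proof.
move=> Ht; rewrite -(size_flat I) -(size_map (@nat_of_ord 5)); apply/eqP; rewrite -all_count.
apply/allP => x /mapP [y _ ->] /=; have := ltn_ord y; lia.
Qed.

Lemma sorted_min (x t : nat) (s : seq nat) : sorted leq (x :: s) -> t < x ->
  forall y, y \in s -> t < y.
Proof.
move=> /= Hp Htx y Hy.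
have := order_path_min leq_trans Hp; move/allP/(_ y Hy) => Hxy. lia.
Qed.

Lemma sorted_cnt0 (x t : nat) (s : seq nat) : sorted leq (x :: s) -> t < x ->
  count (fun y => y <= t) s = 0.
Proof.
move=> Hp Htx; apply/eqP; rewrite -leqn0 leqNgt -has_count; apply/hasPn => y Hy.
have := sorted_min Hp Htx Hy; lia.
Qed.

Lemma nth_sorted_le (s : seq nat) t r : sorted leq s -> r < size s ->
  (nth 0 s r <= t) = (r < count (fun x => x <= t) s).
Proof.
elim: s r => [|x s IH] [|r] //= Hs Hr.
- case: (leqP x t) => Hxt; first by [].
  by rewrite (sorted_cnt0 Hs Hxt).
- rewrite IH //; last by apply: path_sorted Hs.
  case: (leqP x t) => Hxt; first by [].
  rewrite (sorted_cnt0 Hs Hxt) /= add0n.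
  done.
Qed.

Lemma cnt_sort (s : seq nat) t : count (fun x => x <= t) (sort leq s) = count (fun x => x <= t) s.
Proof. exact: count_sort. Qed.

Lemma sort_le_iff (s1 s2 : seq nat) : size s1 = size s2 ->
 (forall r, r < size s1 -> nth 0 (sort leq s1) r <= nth 0 (sort leq s2) r) <->
 (forall t, count (fun x => x <= t) s2 <= count (fun x => x <= t) s1).
Proof.
move=> Hsz.
have S1 := sort_sorted leq_total s1. have S2 := sort_sorted leq_total s2.
have Z1 := size_sort leq s1. have Z2 := size_sort leq s2.
split.
- move=> H t. rewrite -(cnt_sort s1) -(cnt_sort s2).
  set c2 := count _ (sort leq s2).
  case E: c2 => [|c]; first by [].
  have Hc : c2 <= size (sort leq s2) by apply: count_size.
  have Hr : c < size s1 by lia.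
  have := H c Hr.
  have : nth 0 (sort leq s2) c <= t by rewrite nth_sorted_le //; lia.
  move=> A B.
  have : nth 0 (sort leq s1) c <= t by apply: leq_trans B A.
  by rewrite nth_sorted_le //; lia.
- move=> H r Hr.
  set t := nth 0 (sort leq s2) r.
  rewrite nth_sorted_le; last by lia. 2: by [].
  have := H t. rewrite -(cnt_sort s1) -(cnt_sort s2).
  have : r < count (fun x => x <= t) (sort leq s2) by rewrite -nth_sorted_le //; lia.
  lia.
Qed.

Theorem proposition6p2 (d : nat) (hd : (1 <= d)%N) (I K : multi_index d) :
  dom_ge (lambda_d I) (lambda_d K) <-> idx_le I K.
Proof.
set sI := map (@nat_of_ord 5) (flat_idx I); set sK := map (@nat_of_ord 5) (flat_idx K).
have szI : size sI = 2 * d by rewrite size_map size_flat.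
have szK : size sK = 2 * d by rewrite size_map size_flat.
have step1 : idx_le I K <-> forall t, count (fun x => x <= t) sK <= count (fun x => x <= t) sI.
  have szIK : size sI = size sK by rewrite szI szK.
  have := sort_le_iff szIK; rewrite szI => <-.
  by split => H r Hr; apply: H.
rewrite step1.
have sumI := cnt_big I (leqnn 4). have sumK := cnt_big K (leqnn 4).
rewrite cnt_le !big_ord_recr !big_ord0 /= in sumI.
rewrite cnt_le !big_ord_recr !big_ord0 /= in sumK.
split.
- case=> c H t.
  case: (leqP 4 t) => Ht; first by rewrite !cnt_big.
  have H0 := H (@Ordinal 5 0 isT) (@Ordinal 5 4 isT).
  have H1 := H (@Ordinal 5 1 isT) (@Ordinal 5 4 isT).
  have H2 := H (@Ordinal 5 2 isT) (@Ordinal 5 4 isT).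
  have H3 := H (@Ordinal 5 3 isT) (@Ordinal 5 4 isT).
  rewrite /lambda_d /simple_root /eps !mult_val !big_ord_recr !big_ord0 /= in H0.
  rewrite /lambda_d /simple_root /eps !mult_val !big_ord_recr !big_ord0 /= in H1.
  rewrite /lambda_d /simple_root /eps !mult_val !big_ord_recr !big_ord0 /= in H2.
  rewrite /lambda_d /simple_root /eps !mult_val !big_ord_recr !big_ord0 /= in H3.
  case: t Ht => [|[|[|[|t]]]] Ht //; rewrite !cnt_le !big_ord_recr !big_ord0 /=; rewrite /sI /sK in sumI sumK *; lia.
- move=> H.
  exists (fun k : 'I_4 => count (fun x => x <= k) sI - count (fun x => x <= k) sK) => i j.
  have H0 := H 0. have H1 := H 1. have H2 := H 2. have H3 := H 3.
  rewrite !cnt_le !big_ord_recr !big_ord0 /= in H0.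
  rewrite !cnt_le !big_ord_recr !big_ord0 /= in H1.
  rewrite !cnt_le !big_ord_recr !big_ord0 /= in H2.
  rewrite !cnt_le !big_ord_recr !big_ord0 /= in H3.
  rewrite /lambda_d /simple_root /eps !mult_val !big_ord_recr !big_ord0 /=.
  rewrite !cnt_le !big_ord_recr !big_ord0 /=.
  case: i => [[|[|[|[|[|i]]]]] Hi] //; case: j => [[|[|[|[|[|j]]]]] Hj] //=; rewrite /sI /sK in sumI sumK H0 H1 H2 H3 *; lia.
Qed.
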